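(* Let $(X,\rho,\mu)$ be a $K$-doubling metric measure space, $(M,d)$ a complete metric space, $\mathcal D$ an approximate $X$-distribution for $M$, $A\subseteq X$ nonempty and $f\colon A\to M$ an arbitrary function that is approximately $\mathcal D$-differentiable at some $x\in A$. Then $x\in A_f^\mu$ and $\operatorname{Lip}^\mu f(x)\le|[F]|_{x,f(x)}$ for every approximate $\mathcal D$-differential $[F]\in\mathcal D_{x,f(x)}$ of $f$ at $x$. If in addition $A$ is a $\mu$-neighborhood of $x$, then the approximate $\mathcal D$-differential $df_x$ of $f$ at $x$ is unique and $\operatorname{Lip}^\mu f(x)=|df_x|_{x,f(x)}$.
   Context: A $K$-doubling metric measure space ($K>0$) is a triple $(X,\rho,\mu)$ where $(X,\rho)$ is a complete separable metric space and $\mu$ is a Borel-regular outer measure on $X$ with $0<\mu(B_{2r}(x))\le K\mu(B_r(x))<+\infty$ for all $x\in X$, $r>0$. A set $E\ni x$ is a $\mu$-neighborhood of $x$ if there is a Borel set $B\subseteq E$ with $\lim_{r\to0^+}\mu(B_r(x)\setminus B)/\mu(B_r(x))=0$; these sets define the $\mu$-topology on $X$. A point $x$ is a $\mu$-accumulation point of $A$ if $A\cap U\setminus\{x\}\ne\emptyset$ for every $\mu$-neighborhood $U$ of $x$; for such $x$ and $g\colon A\to\mathbb R$, $\mu\text{-}\lim_{y\in A,y\to x}g(y)=z$ means that for every $\varepsilon>0$ there is a $\mu$-neighborhood $U$ of $x$ with $|g(y)-z|<\varepsilon$ for all $y\in A\cap U\setminus\{x\}$, and $\mu\text{-}\limsup_{y\in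 A,y\to x}g(y)=\inf_U\sup_{y\in U\cap A\setminus\{x\}}g(y)$ (infimum over $\mu$-neighborhoods $U$ of $x$). For $x\in X$, $P\in M$, let $\mathcal C^\mu_{x,P}$ be the set of equivalence classes $[F]$ of Lipschitz maps $F\colon B\to M$ defined on a $\mu$-neighborhood $B$ of $x$ with $F(x)=P$, modulo $F\sim G\iff\mu\text{-}\lim_{y\to x}d(F(y),G(y))/\rho(y,x)=0$; set $|[F]|_{x,P}=\limsup_{y\to x}d(F(y),P)/\rho(y,x)$. An approximate $X$-distribution for $M$ is any subset $\mathcal D\subseteq\bigsqcup_{(x,P)}\mathcal C^\mu_{x,P}$, with $\mathcal D_{x,P}=\mathcal D\cap\mathcal C^\mu_{x,P}$. For $f\colon A\to M$ and a $\mu$-accumulation point $x\in A$ of $A$, $f$ is approximately $\mathcal D$-differentiable at $x$ if there is $[F]\in\mathcal D_{x,f(x)}$ with $\mu\text{-}\lim_{y\in A,y\to x}d(f(y),F(y))/\rho(y,x)=0$; such $[F]$ is an approximate $\mathcal D$-differential. Finally $\operatorname{Lip}^\mu f(x)=\mu\text{-}\limsup_{y\in A,y\to x}d(f(y),f(x))/\rho(y,x)$ and $A_f^\mu$ is the set of $\mu$-accumulation points $x\in A$ of $A$ with $\operatorname{Lip}^\mu f(x)<+\infty$. *)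

(* Defs.v *)
From HB Require Import structures.
From mathcomp Require Import all_boot all_order all_algebra.
From mathcomp Require Import all_classical all_reals all_analysis.
Set Implicit Arguments. Unset Strict Implicit. Unset Printing Implicit Defensive.
Import Order.TTheory GRing.Theory Num.Theory.
Import numFieldNormedType.Exports.
Local Open Scope classical_set_scope.
Local Open Scope ring_scope.

Section Defs.
Variable R : realType.

Definition is_metric (T : Type) (d : T -> T -> R) : Prop :=
  (forall x y, 0 <= d x y) /\ (forall x y, d x y = 0 <-> x = y) /\
  (forall x y, d x y = d y x) /\ (forall x y z, d x z <= d x y + d y z).

Definition metric_complete (T : Type) (d : T -> T -> R) : Prop :=
  forall u : nat -> T,
    (forall e, 0 < e -> exists N, forall m n, (N <= m)%N -> (N <= n)%N -> d (u m) (u n) < e) ->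
    exists l, forall e, 0 < e -> exists N, forall n, (N <= n)%N -> d (u n) l < e.

Definition metric_separable (T : Type) (d : T -> T -> R) : Prop :=
  exists D : set T, countable D /\ forall x e, 0 < e -> exists2 y, D y & d x y < e.

Definition mball (T : Type) (d : T -> T -> R) (x : T) (r : R) : set T :=
  [set y | d x y < r].

Definition metric_open (T : Type) (d : T -> T -> R) (U : set T) : Prop :=
  forall x, U x -> exists2 r, 0 < r & mball d x r `<=` U.

Definition metric_borel (T : Type) (d : T -> T -> R) : set (set T) :=
  <<s [set U | metric_open d U] >>.

Definition borel_regular (X : Type) (rho : X -> X -> R)
    (mu : {outer_measure set X -> \bar R}) : Prop :=
  (forall B, metric_borel rho B -> mu.-caratheodory B) /\
  (forall A : set X, exists B, [/\ metric_borel rho B, (A `<=` B) & mu B = mu A]).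

Definition doubling_mms (K : R) (X : Type) (rho : X -> X -> R)
    (mu : {outer_measure set X -> \bar R}) : Prop :=
  [/\ 0 < K, is_metric rho, metric_complete rho, metric_separable rho &
     borel_regular rho mu] /\
      forall x r, 0 < r ->
        (0 < mu (mball rho x (2 * r)))%E /\
        (mu (mball rho x (2 * r)) <= K%:E * mu (mball rho x r))%E /\
        (K%:E * mu (mball rho x r) < +oo)%E.

Section MuTopology.
Variables (X : Type) (rho : X -> X -> R) (mu : set X -> \bar R).

Definition mu_nbhd (x : X) (E : set X) : Prop :=
  E x /\ exists B, [/\ metric_borel rho B, (B `<=` E) &
     (fun r => fine (mu (mball rho x r `\` B)) / fine (mu (mball rho x r)))
        @ 0^'+ --> (0 : R)].

Definition mu_acc (A : set X) (x : X) : Prop :=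
  forall U, mu_nbhd x U -> exists y, [/\ A y, U y & y <> x].

Definition mu_lim (A : set X) (x : X) (g : X -> R) (z : R) : Prop :=
  forall e, 0 < e -> exists U, mu_nbhd x U /\
     forall y, A y -> U y -> y <> x -> `|g y - z| < e.

Definition mu_limsup (A : set X) (x : X) (g : X -> R) : \bar R :=
  ereal_inf [set ereal_sup [set (g y)%:E | y in U `&` A `\ x] | U in mu_nbhd x].
End MuTopology.

Section Germs.
Variables (X : Type) (rho : X -> X -> R) (mu : set X -> \bar R).
Variables (M : Type) (dM : M -> M -> R).

(* A representative (B, F) of an element of C^mu_{x,P}: F : B -> M Lipschitz
   on a mu-neighbourhood B of x with F(x) = P (values of F off B are irrelevant). *)
Definition germ (x : X) (P : M) (B : set X) (F : X -> M) : Prop :=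
  [/\ mu_nbhd rho mu x B,
      exists L : R, forall y z, B y -> B z -> dM (F y) (F z) <= L * rho y z
    & F x = P].

Definition germ_equiv (x : X) (B : set X) (F : X -> M) (B' : set X) (G : X -> M) : Prop :=
  mu_lim rho mu (B `&` B') x (fun y => dM (F y) (G y) / rho y x) 0.

Definition germ_norm (x : X) (P : M) (B : set X) (F : X -> M) : \bar R :=
  ereal_inf [set ereal_sup [set (dM (F y) P / rho y x)%:E | y in B `&` mball rho x r `\ x]
            | r in [set r : R | 0 < r]].

(* An approximate X-distribution is a set of equivalence classes; it is given
   here by a predicate [D x P B F] on representatives, and the class of (B,F)
   belongs to D_{x,P} iff it is equivalent to some representative in D. *)
Definition in_distr (D : X -> M -> set X -> (X -> M) -> Prop)
    (x : X) (P : M) (B : set X) (F : X -> M) : Prop :=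
  germ x P B F /\
  exists B' G, [/\ D x P B' G, germ x P B' G & germ_equiv x B F B' G].

Definition Lip_mu (A : set X) (f : X -> M) (x : X) : \bar R :=
  mu_limsup rho mu A x (fun y => dM (f y) (f x) / rho y x).

Definition in_A_f_mu (A : set X) (f : X -> M) (x : X) : Prop :=
  [/\ A x, mu_acc rho mu A x & (Lip_mu A f x < +oo)%E].

Definition approx_differential (D : X -> M -> set X -> (X -> M) -> Prop)
    (A : set X) (f : X -> M) (x : X) (B : set X) (F : X -> M) : Prop :=
  [/\ A x, mu_acc rho mu A x, in_distr D x (f x) B F &
      mu_lim rho mu (A `&` B) x (fun y => dM (f y) (F y) / rho y x) 0].

Definition approx_differentiable (D : X -> M -> set X -> (X -> M) -> Prop)
    (A : set X) (f : X -> M) (x : X) : Prop :=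
  exists B F, approx_differential D A f x B F.
End Germs.
End Defs.

(* Main.v *)
Require Import Defs.
From HB Require Import structures.
From mathcomp Require Import all_boot all_order all_algebra.
From mathcomp Require Import all_classical all_reals all_analysis.
From mathcomp Require Import ring lra.
Import Order.TTheory GRing.Theory Num.Theory.
Import numFieldNormedType.Exports.
Set Implicit Arguments. Unset Strict Implicit.
Local Open Scope classical_set_scope.
Local Open Scope ring_scope.

Lemma cvg0P (R : realType) (h : R -> R) :
  h @ 0^'+ --> (0:R) <->
  forall e, 0 < e -> exists2 d, 0 < d & forall r, 0 < r < d -> `|h r| < e.
Proof.
split.
- move/cvgrPdist_lt => H e e0; have := H e e0.
  rewrite near_withinE /= => /nbhs_ballP [d d0 Hd]; exists d => // r /andP [r0 rd].
  have := Hd r; rewrite /ball /= sub0r normrN gtr0_norm // => /(_ rd r0).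
  by rewrite sub0r normrN.
- move=> H; apply/cvgrPdist_lt => e e0; have [d d0 Hd] := H e e0.
  near=> t; rewrite sub0r normrN; apply: Hd; apply/andP; split.
  + near: t; exact: nbhs_right_gt.
  + near: t; exact: nbhs_right_lt.
Unshelve. all: by end_near.
Qed.

Lemma borel_setI (R : realType) (X : Type) (rho : X -> X -> R) (B C : set X) :
  metric_borel rho B -> metric_borel rho C -> metric_borel rho (B `&` C).
Proof.
move=> hB hC; have [S0 SC SU] := smallest_sigma_algebra setT [set U | metric_open rho U].
have -> : B `&` C = ~` (~` B `|` ~` C) by rewrite setCU !setCK.
have hc : forall E, metric_borel rho E -> metric_borel rho (~` E).
  by move=> E hE; rewrite -setTD; apply: SC.
apply hc; rewrite -bigcup2E; apply: (SU (bigcup2 (~` B) (~` C))) => -[|[|n]] /=;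
  [exact: hc|exact: hc|exact: S0].
Qed.
Lemma ball_fin (R : realType) (K : R) (X : Type) (rho : X -> X -> R)
    (mu : {outer_measure set X -> \bar R}) :
  doubling_mms K rho mu -> forall y r, 0 < r ->
  mu (mball rho y r) \is a fin_num /\ 0 < fine (mu (mball rho y r)).
Proof.
move=> [[K0 _ _ _ _] Hd] y r r0.
have [_ [_ H3]] := Hd y r r0.
have [H1 _] := Hd y (r / 2) (divr_gt0 r0 (ltr0Sn _ 1)).
rewrite mulrC divfK ?pnatr_eq0 // in H1.
have fin : mu (mball rho y r) \is a fin_num.
  rewrite fin_numE; apply/andP; split.
    by apply/negP => /eqP E; have := outer_measure_ge0 mu (mball rho y r); rewrite E.
  by apply/negP => /eqP E; move: H3; rewrite E gt0_muley ?lte_fin // ltxx.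
split => //; rewrite -lte_fin fineK //.
Qed.

Lemma sub_fin (R : realType) (K : R) (X : Type) (rho : X -> X -> R)
    (mu : {outer_measure set X -> \bar R}) :
  doubling_mms K rho mu -> forall y r (Y : set X), 0 < r -> Y `<=` mball rho y r ->
  mu Y \is a fin_num /\ 0 <= fine (mu Y) <= fine (mu (mball rho y r)).
Proof.
move=> Hd y r Y r0 YB; have [fb _] := ball_fin Hd y r0.
have le := le_outer_measure mu _ _ YB.
have g0 := outer_measure_ge0 mu Y.
have fY : mu Y \is a fin_num.
  by rewrite ge0_fin_numE // (le_lt_trans le) // ltey_eq fb.
split => //; rewrite fine_ge0 //=; exact: fine_le.
Qed.

Lemma doubling_iter (R : realType) (K : R) (X : Type) (rho : X -> X -> R)
    (mu : {outer_measure set X -> \bar R}) :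
  doubling_mms K rho mu -> forall y t k, 0 < t ->
  fine (mu (mball rho y (2 ^+ k * t))) <= K ^+ k * fine (mu (mball rho y t)).
Proof.
move=> Hd y t k t0; have [[K0 _ _ _ _] Hd'] := Hd.
elim: k => [|k IH]; first by rewrite !expr0 !mul1r.
have tk : 0 < 2 ^+ k * t by rewrite mulr_gt0 // exprn_gt0.
have [_ [H2 _]] := Hd' y _ tk.
have [f1 _] := ball_fin Hd y tk.
have [f2 _] := ball_fin Hd y (mulr_gt0 (ltr0Sn _ 1) tk : 0 < 2 * (2 ^+ k * t)).
rewrite exprS -mulrA; apply: (le_trans (y := K * fine (mu (mball rho y (2 ^+ k * t))))).
  by rewrite -lee_fin EFinM !fineK.
rewrite exprS -mulrA ler_pM2l //.
Qed.

Lemma nbhdP (R : realType) (X : Type) (rho : X -> X -> R)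
    (mu : set X -> \bar R) x E :
  mu_nbhd rho mu x E <-> E x /\ exists B, [/\ metric_borel rho B, B `<=` E &
   forall e, 0 < e -> exists2 d, 0 < d & forall r, 0 < r < d ->
     `|fine (mu (mball rho x r `\` B)) / fine (mu (mball rho x r))| < e].
Proof.
rewrite /mu_nbhd; split => -[Ex [B [HB BE Hc]]]; split => //; exists B; split => //;
  by apply/cvg0P.
Qed.

Lemma ball_nbhd (R : realType) (K : R) (X : Type) (rho : X -> X -> R)
    (mu : {outer_measure set X -> \bar R}) x r :
  doubling_mms K rho mu -> 0 < r -> mu_nbhd rho mu x (mball rho x r).
Proof.
move=> [[_ [r0 [rE [rS rT]]] _ _ _] _] hr; apply/nbhdP; split.
  by rewrite /mball /= (proj2 (rE x x)).
exists (mball rho x r); split => //.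
  apply: sub_sigma_algebra => y /= hy.
  exists (r - rho y x); first by rewrite subr_gt0 rS.
  move=> z /= hz; rewrite /mball /=; apply: (le_lt_trans (rT _ y _)).
  move: hz; rewrite (rS y x) /mball /=.
  by rewrite ltrBrDl addrC.
move=> e e0; exists r => // s /andP [s0 sr].
have -> : mball rho x s `\` mball rho x r = set0.
  by apply/seteqP; split => // z [/= h1 h2]; apply: h2; apply: lt_trans sr.
by rewrite outer_measure0 /= mul0r normr0.
Qed.

Lemma nbhdI (R : realType) (K : R) (X : Type) (rho : X -> X -> R)
    (mu : {outer_measure set X -> \bar R}) x E1 E2 :
  doubling_mms K rho mu -> mu_nbhd rho mu x E1 -> mu_nbhd rho mu x E2 ->
  mu_nbhd rho mu x (E1 `&` E2).
Proof.
move=> Hd /nbhdP [x1 [B1 [hB1 BE1 c1]]] /nbhdP [x2 [B2 [hB2 BE2 c2]]].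
apply/nbhdP; split => //; exists (B1 `&` B2); split.
- exact: borel_setI.
- by move=> z [/BE1 ? /BE2 ?].
move=> e e0; have e20 : 0 < e / 2 by rewrite divr_gt0.
have [d1 d10 h1] := c1 _ e20; have [d2 d20 h2] := c2 _ e20.
exists (Num.min d1 d2); first by rewrite lt_min d10 d20.
move=> r /andP [r0]; rewrite lt_min => /andP [rd1 rd2].
have := h1 r; rewrite r0 rd1 => /(_ isT) H1.
have := h2 r; rewrite r0 rd2 => /(_ isT) H2.
have [fb mb] := ball_fin Hd x r0.
have [f1 /andP [g1 _]] := sub_fin Hd r0 (@subDsetl _ (mball rho x r) B1).
have [f2 /andP [g2 _]] := sub_fin Hd r0 (@subDsetl _ (mball rho x r) B2).
have [f3 /andP [g3 _]] := sub_fin Hd r0 (@subDsetl _ (mball rho x r) (B1 `&` B2)).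
rewrite ger0_norm in H1; last by rewrite divr_ge0 // ltW.
rewrite ger0_norm in H2; last by rewrite divr_ge0 // ltW.
have le : fine (mu (mball rho x r `\` (B1 `&` B2))) <=
    fine (mu (mball rho x r `\` B1)) + fine (mu (mball rho x r `\` B2)).
  rewrite -lee_fin EFinD !fineK //; rewrite setDIr; exact: outer_measureU2.
apply: (le_lt_trans (y := fine (mu (mball rho x r `\` B1)) / fine (mu (mball rho x r))
   + fine (mu (mball rho x r `\` B2)) / fine (mu (mball rho x r)))).
  rewrite ger0_norm; last by rewrite divr_ge0 // ltW.
  by rewrite -mulrDl ler_pM2r ?invr_gt0.
by rewrite [ltRHS](splitr e); exact: ltrD.
Qed.

Lemma near_core (R : realType) (K : R) (X : Type) (rho : X -> X -> R)
    (mu : {outer_measure set X -> \bar R}) x (C : set X) (n : nat) :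
  doubling_mms K rho mu ->
  (forall e, 0 < e -> exists2 d, 0 < d & forall r, 0 < r < d ->
     `|fine (mu (mball rho x r `\` C)) / fine (mu (mball rho x r))| < e) ->
  exists2 r0, 0 < r0 & forall y, 0 < rho x y < r0 ->
     exists z, C z /\ rho y z < rho x y / 2 ^+ n.
Proof.
move=> Hd Hc; have [[K0 [rp [rE [rS rT]]] _ _ _] _] := Hd.
set P := K ^+ n.+2; have P0 : 0 < P by rewrite exprn_gt0.
have Pi : 0 < P^-1 by rewrite invr_gt0.
have [d d0 hd] := Hc _ Pi.
exists (d / 2); first by rewrite divr_gt0.
move=> y /andP [s0 sd]; set s := rho x y in s0 sd *.
case: (pselect (exists z, C z /\ rho y z < s / 2 ^+ n)) => // nz; exfalso.
have p0 : 0 < (2 ^+ n : R) by rewrite exprn_gt0.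
have p1 : 1 <= (2 ^+ n : R) by rewrite exprn_ege1 // ler1n.
have t0 : 0 < s / 2 ^+ n by rewrite divr_gt0.
have ts : s / 2 ^+ n <= s by rewrite ler_pdivrMr // ler_peMr // ltW.
have s20 : 0 < 2 * s by rewrite mulr_gt0.
have sub : mball rho y (s / 2 ^+ n) `<=` mball rho x (2 * s) `\` C.
  move=> z hz; split.
    rewrite /mball /=; apply: (le_lt_trans (rT _ y _)).
    have hz' : rho y z < s / 2 ^+ n := hz.
    rewrite -/s; lra.
  by move=> Cz; apply: nz; exists z.
have s40 : 0 < 4 * s by rewrite mulr_gt0.
have sub2 : mball rho x (2 * s) `<=` mball rho y (4 * s).
  move=> z hz; rewrite /mball /=; apply: (le_lt_trans (rT _ x _)).
  have hz' : rho x z < 2 * s := hz.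
  rewrite (rS y x) -/s; lra.
have [fa /andP [ga _]] := sub_fin Hd s20 (@subDsetl _ (mball rho x (2 * s)) C).
have [fy _] := ball_fin Hd y t0.
have [fx mx] := ball_fin Hd x s20.
have [f4 _] := ball_fin Hd y s40.
have h1 : fine (mu (mball rho y (s / 2 ^+ n))) <= fine (mu (mball rho x (2 * s) `\` C)).
  by apply: fine_le => //; apply: le_outer_measure.
have h2 : fine (mu (mball rho x (2 * s))) <= fine (mu (mball rho y (4 * s))).
  by apply: fine_le => //; apply: le_outer_measure.
have h3 := doubling_iter Hd y n.+2 t0.
have e4 : 2 ^+ n.+2 * (s / 2 ^+ n) = 4 * s.
  by rewrite !exprS; field; exact: lt0r_neq0 p0.
rewrite e4 -/P in h3.
have sd2 : 2 * s < d by lra.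
have := hd (2 * s); rewrite s20 sd2 => /(_ isT) H.
rewrite ger0_norm in H; last by rewrite divr_ge0 // ltW.
rewrite ltr_pdivrMr // in H.
have H' : P * fine (mu (mball rho x (2 * s) `\` C)) < fine (mu (mball rho x (2 * s))).
  by move: H; rewrite -(ltr_pM2l P0) mulrA divff ?mul1r // lt0r_neq0.
have H2 : fine (mu (mball rho x (2 * s))) <= P * fine (mu (mball rho x (2 * s) `\` C)).
  exact: (le_trans h2 (le_trans h3 (ler_wpM2l (ltW P0) h1))).
by move: H'; rewrite ltNge H2.
Qed.

Lemma lip_le_norm (R : realType) (K : R) (X : Type) (rho : X -> X -> R)
    (mu : {outer_measure set X -> \bar R}) (M : Type) (dM : M -> M -> R)
    (D : X -> M -> set X -> (X -> M) -> Prop) (A : set X) (f : X -> M) (x : X) B F :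
  doubling_mms K rho mu -> is_metric dM ->
  approx_differential rho mu dM D A f x B F ->
  (Lip_mu rho mu dM A f x <= germ_norm rho dM x (f x) B F)%E.
Proof.
move=> Hd [dp [dE [dS dT]]] [Ax acc [[Bn _ _] _] lim].
have [[_ [rp [rE [rS rT]]] _ _ _] _] := Hd.
apply: le_ereal_inf_tmp => _ [r /= r0 <-].
apply/lee_addgt0Pr => e e0.
have [V [Vn HV]] := lim e e0.
have Un : mu_nbhd rho mu x (mball rho x r `&` (B `&` V)).
  exact: (nbhdI Hd (ball_nbhd x Hd r0) (nbhdI Hd Bn Vn)).
apply: le_trans; first by apply: ereal_inf_lbound; exists (mball rho x r `&` (B `&` V)).
apply: ge_ereal_sup => _ [y [[[ry [By Vy]] Ay] ynx] <-].
have ynx' : y <> x by move=> h; apply: ynx.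
have ry0 : 0 < rho y x.
  by rewrite lt_neqAle rp andbT eq_sym; apply/eqP => /rE.
have hy : ((dM (F y) (f x) / rho y x)%:E <=
   ereal_sup [set (dM (F y) (f x) / rho y x)%:E | y in B `&` mball rho x r `\ x])%E.
  by apply: ereal_sup_ubound; exists y => //; split => //; split.
have := HV y (conj Ay By) Vy ynx'; rewrite subr0 => H.
apply: le_trans (leeD hy (lexx e%:E)).
rewrite -EFinD lee_fin.
apply: (le_trans (y := dM (f y) (F y) / rho y x + dM (F y) (f x) / rho y x)).
  by rewrite -mulrDl ler_pM2r ?invr_gt0.
rewrite addrC lerD2l; apply: ltW; exact: le_lt_trans (ler_norm _) H.
Qed.

Lemma diff_unique (R : realType) (K : R) (X : Type) (rho : X -> X -> R)
    (mu : {outer_measure set X -> \bar R}) (M : Type) (dM : M -> M -> R)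
    (D : X -> M -> set X -> (X -> M) -> Prop) (A : set X) (f : X -> M) (x : X) B F B' F' :
  doubling_mms K rho mu -> is_metric dM -> mu_nbhd rho mu x A ->
  approx_differential rho mu dM D A f x B F ->
  approx_differential rho mu dM D A f x B' F' ->
  germ_equiv rho mu dM x B F B' F'.
Proof.
move=> Hd [dp [dE [dS dT]]] An [Ax acc _ lim] [_ _ _ lim'] e e0.
have [[_ [rp [rE [rS rT]]] _ _ _] _] := Hd.
have e2 : 0 < e / 2 by rewrite divr_gt0.
have [V [Vn HV]] := lim _ e2; have [V' [Vn' HV']] := lim' _ e2.
exists (A `&` (V `&` V')); split; first exact: (nbhdI Hd An (nbhdI Hd Vn Vn')).
move=> y [By B'y] [Ay [Vy V'y]] ynx.
have ry0 : 0 < rho y x.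
  by rewrite lt_neqAle rp andbT eq_sym; apply/eqP => /rE.
have := HV y (conj Ay By) Vy ynx; rewrite subr0 => H1.
have := HV' y (conj Ay B'y) V'y ynx; rewrite subr0 => H2.
rewrite subr0 ger0_norm; last by rewrite divr_ge0.
apply: (le_lt_trans (y := dM (f y) (F y) / rho y x + dM (f y) (F' y) / rho y x)).
  rewrite -mulrDl ler_pM2r ?invr_gt0 // (dS (f y) (F y)); exact: dT.
rewrite [ltRHS](splitr e); apply: ltrD.
  exact: le_lt_trans (ler_norm _) H1.
exact: le_lt_trans (ler_norm _) H2.
Qed.

Lemma norm_le_lip (R : realType) (K : R) (X : Type) (rho : X -> X -> R)
    (mu : {outer_measure set X -> \bar R}) (M : Type) (dM : M -> M -> R)
    (D : X -> M -> set X -> (X -> M) -> Prop) (A : set X) (f : X -> M) (x : X) B F :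
  doubling_mms K rho mu -> is_metric dM -> mu_nbhd rho mu x A ->
  approx_differential rho mu dM D A f x B F ->
  (germ_norm rho dM x (f x) B F <= Lip_mu rho mu dM A f x)%E.
Proof.
move=> Hd [dp [dE [dS dT]]] An [Ax acc [[Bn [L HL] FP] _] lim].
have [[K0 [rp [rE [rS rT]]] _ _ _] _] := Hd.
have rpos : forall y, y <> x -> 0 < rho y x.
  by move=> y ynx; rewrite lt_neqAle rp andbT eq_sym; apply/eqP => /rE.
apply: le_ereal_inf_tmp => _ [U Un <-].
have [y0 [Ay0 Uy0 y0x]] := acc U Un.
have S0 : ((dM (f y0) (f x) / rho y0 x)%:E <=
   ereal_sup [set (dM (f y) (f x) / rho y x)%:E | y in U `&` A `\ x])%E.
  by apply: ereal_sup_ubound; exists y0 => //; split => //; split.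
move: S0; case ES : (ereal_sup _) => [s| |] S0; last 2 first.
- exact: leey.
- by move: S0.
have s0 : 0 <= s.
  by move: S0; rewrite lee_fin; apply: le_trans; rewrite divr_ge0.
apply/lee_addgt0Pr => eta eta0.
set L' := Num.max L 0.
have L'0 : 0 <= L' by rewrite le_max lexx orbT.
have LL' : L <= L' by rewrite le_max lexx.
set e := eta / 4.
have e0 : 0 < e by rewrite divr_gt0.
have [V [Vn HV]] := lim e e0.
have Wn := nbhdI Hd Un (nbhdI Hd An (nbhdI Hd Bn Vn)).
move/nbhdP: Wn => [_ [C [_ CW Cc]]].
set Q := L' + s + 1.
have Q0 : 0 < Q by rewrite /Q; lra.
have Qe : 0 <= Q / (2 * e) by rewrite divr_ge0 ?ltW // mulr_gt0.
have [N HN] : exists N : nat, Q / (2 * e) < N%:R.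
  by exists (Num.Def.archi_bound (Q / (2 * e))); exact: archi_boundP Qe.
set p : R := 2 ^+ N.
have p0 : 0 < p by rewrite exprn_gt0.
have p1 : 1 <= p by rewrite exprn_ege1 // ler1n.
have Np : (N%:R : R) <= p.
  by rewrite /p -natrX ler_nat ltnW // ltn_expl.
have Qp : Q / p <= 2 * e.
  have := lt_le_trans HN Np; rewrite ltr_pdivrMr ?mulr_gt0 // => h.
  by rewrite ler_pdivrMr // mulrC ltW.
have [r0 r00 hr0] := near_core N Hd Cc.
apply: le_trans; first by apply: ereal_inf_lbound; exists r0.
apply: ge_ereal_sup => _ [y [[By ry] ynx] <-].
have ynx' : y <> x by move=> h; apply: ynx.
set s1 := rho x y.
have s10 : 0 < s1 by rewrite /s1 rS; exact: rpos.
have ry' : rho x y < r0 := ry.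
have [z [Cz hz]] := hr0 y (introT andP (conj s10 ry')).
rewrite -/s1 -/p in hz.
have [Uz [Az [Bz Vz]]] := CW z Cz.
set t := s1 / p.
have t0 : 0 < t by rewrite divr_gt0.
have ts : t <= s1 by rewrite ler_pdivrMr // ler_peMr // ltW.
have zx : z <> x.
  move=> E; move: hz; rewrite E (rS y x) -/s1 => h.
  by move: (lt_le_trans h ts); rewrite ltxx.
have rzx : rho z x <= t + s1.
  apply: le_trans (rT _ y _) _; rewrite (rS z y) (rS y x) -/s1; apply: lerD => //; exact: ltW.
have rz0 := rpos z zx.
have gz : dM (f z) (f x) / rho z x <= s.
  rewrite -lee_fin -ES; apply: ereal_sup_ubound; exists z => //; split => //; split.
have h3 : dM (f z) (f x) <= s * t + s * s1.
  rewrite ler_pdivrMr // in gz; apply: le_trans gz _.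
  by rewrite -mulrDr ler_wpM2l.
have := HV z (conj Az Bz) Vz zx; rewrite subr0 => H.
have h2 : dM (F z) (f z) <= e * t + e * s1.
  rewrite dS; have := le_lt_trans (ler_norm _) H; rewrite ltr_pdivrMr // => H'.
  by apply: le_trans (ltW H') _; rewrite -mulrDr ler_wpM2l // ltW.
have h1 : dM (F y) (F z) <= L' * t.
  apply: le_trans (HL y z By Bz) _; apply: le_trans (ler_wpM2r (rp _ _) LL') _.
  by apply: ler_wpM2l => //; apply: ltW.
have h4 : Q * t <= 2 * e * s1.
  by rewrite /t mulrA mulrAC ler_wpM2r // ltW.
have h4' : L' * t + s * t + t <= 2 * (e * s1).
  by move: h4; rewrite /Q !mulrDl mul1r mulrA.
have h5 : e * t <= e * s1 by rewrite ler_wpM2l // ltW.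
have h6 : eta * s1 = 4 * (e * s1) by rewrite /e mulrA; congr (_ * _); field.
have tri : dM (F y) (f x) <= dM (F y) (F z) + (dM (F z) (f z) + dM (f z) (f x)).
  apply: le_trans (dT _ (F z) _) _; rewrite lerD2l; exact: dT.
rewrite -EFinD lee_fin ler_pdivrMr; last by rewrite rS -/s1.
rewrite (rS y x) -/s1 mulrDl h6.
lra.
Qed.

Unset Implicit Arguments.
Set Strict Implicit.

Theorem proposition2p6 (R : realType) (K : R) (X : Type) (rho : X -> X -> R)
    (mu : {outer_measure set X -> \bar R}) (M : Type) (dM : M -> M -> R)
    (D : X -> M -> set X -> (X -> M) -> Prop) (A : set X) (f : X -> M) (x : X) :
  doubling_mms K rho mu ->
  is_metric dM -> metric_complete dM ->
  A !=set0 -> A x ->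
  approx_differentiable rho mu dM D A f x ->
  (in_A_f_mu rho mu dM A f x /\
   forall B F, approx_differential rho mu dM D A f x B F ->
     (Lip_mu rho mu dM A f x <= germ_norm rho dM x (f x) B F)%E) /\
  (mu_nbhd rho mu x A ->
     (forall B F B' F', approx_differential rho mu dM D A f x B F ->
        approx_differential rho mu dM D A f x B' F' ->
        germ_equiv rho mu dM x B F B' F') /\
     (forall B F, approx_differential rho mu dM D A f x B F ->
        Lip_mu rho mu dM A f x = germ_norm rho dM x (f x) B F)).
Proof.
move=> Hd hM _ _ Ax [B0 [F0 diff0]].
have [[_ [rp [rE [rS rT]]] _ _ _] _] := Hd.
split.
- split; last by move=> B F d; exact: lip_le_norm Hd hM d.
  case: (diff0) => _ acc [[Bn [L HL] FP] _] _.
  split => //.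
  apply: le_lt_trans (lip_le_norm Hd hM diff0) _.
  apply: (@le_lt_trans _ _ (Num.max L 0)%:E); last exact: ltry.
  apply: le_trans; first by apply: ereal_inf_lbound; exists 1 => //; exact: ltr01.
  apply: ge_ereal_sup => _ [y [[By _] ynx] <-].
  have ynx' : y <> x by move=> h; apply: ynx.
  have ry0 : 0 < rho y x.
    by rewrite lt_neqAle rp andbT eq_sym; apply/eqP => /rE.
  rewrite lee_fin ler_pdivrMr // -FP; apply: le_trans (HL y x By Bn.1) _.
  by rewrite ler_wpM2r // le_max lexx.
- move=> An; split.
  + move=> B F B' F' d d'; exact: diff_unique Hd hM An d d'.
  + move=> B F d; apply: le_anti; rewrite (lip_le_norm Hd hM d) (norm_le_lip Hd hM An d).
    by [].
Qed.
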